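(* Let $A,B\subset\mathbb{R}$ be sets of positive Lebesgue measure. Then $(A\times B)+S^1$ contains an annulus of radius $1$, i.e. a set of the form $\{x\in\mathbb{R}^2: 1-\varepsilon<|x-p|<1+\varepsilon\}$ for some $p\in\mathbb{R}^2$ and $\varepsilon>0$.
   Context: $S^1=\{x\in\mathbb{R}^2:|x|=1\}$ is the Euclidean unit circle and $X+Y=\{x+y:x\in X,y\in Y\}$. *)

(* Defs.v *)
From mathcomp Require Import all_boot all_order all_algebra.
From mathcomp Require Import all_classical all_reals all_analysis.
Import Order.TTheory GRing.Theory Num.Theory.
Local Open Scope classical_set_scope.
Local Open Scope ring_scope.

Definition eucl_norm {R : realType} (x : R * R) : R :=
  Num.sqrt (x.1 ^+ 2 + x.2 ^+ 2).

Definition circle1 {R : realType} : set (R * R) :=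
  [set x | eucl_norm x = 1].

Definition minkowski_sum2 {R : realType} (X Y : set (R * R)) : set (R * R) :=
  [set z | exists x y, X x /\ Y y /\ z = (x.1 + y.1, x.2 + y.2)].

Definition annulus1 {R : realType} (p : R * R) (eps : R) : set (R * R) :=
  [set x | 1 - eps < eucl_norm (x.1 - p.1, x.2 - p.2) < 1 + eps].

(* Main.v *)
Require Import Defs.
From mathcomp Require Import all_boot all_order all_algebra.
From mathcomp Require Import all_classical all_reals all_analysis.
From mathcomp Require Import ring lra.
Import Order.TTheory GRing.Theory Num.Theory.
Import numFieldNormedType.Exports.
Local Open Scope classical_set_scope.
Local Open Scope ring_scope.

Lemma lm_le (R : realType) (X Y : set R) : X `<=` Y ->
  (lebesgue_measure X <= lebesgue_measure Y)%E.
Proof. move=> XY; exact: (@le_mu_ext _ _ R (wlength idfun) X Y XY). Qed.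
Arguments lm_le {R X Y}.

Lemma K_itv (R : realType) (f : R -> R) (I : set R) (m a b : R) : 0 < m ->
  (forall s s', I s -> I s' -> m * `|s - s'| <= `|f s - f s'|) ->
  (lebesgue_measure (I `&` f @^-1` `]a, b]%classic) <=
     (2 / m)%:E * wlength idfun `]a, b]%classic)%E.
Proof.
move=> m0 Hf.
case: (pselect (exists s0, (I `&` f @^-1` `]a,b]%classic) s0)) => [[s0 [Is0 Fs0]]|hn]; last first.
  have -> : I `&` f @^-1` `]a,b]%classic = set0.
    by apply/seteqP; split => // s Hs; apply: hn; exists s.
  rewrite measure0; apply: mule_ge0; first by rewrite lee_fin divr_ge0 // ltW.
  rewrite wlength_itv /= lte_fin; case: ltP => // h.
  by rewrite -EFinD; apply/ltW; rewrite -[X in (X < _)%E]/(0%R%:E) lte_fin subr_gt0.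
move: Fs0; rewrite /= in_itv /= => /andP [as0 s0b].
have ab : a < b by apply: lt_le_trans as0 s0b.
set D := (b - a) / m.
apply: (le_trans (@lm_le R _ (`]s0 - D, s0 + D]%classic) _)).
  move=> s [Is]; rewrite /= !in_itv /= => /andP [as1 s1b].
  have h1 : `|f s - f s0| < b - a.
    rewrite ltr_norml; apply/andP; split; lra.
  have h2 : `|s - s0| < D.
    rewrite /D ltr_pdivlMr //; rewrite mulrC.
    exact: le_lt_trans (Hf _ _ Is Is0) h1.
  move: h2; rewrite ltr_norml => /andP [h3 h4].
  apply/andP; split; lra.
rewrite lebesgue_measure_itv /= wlength_itv /= !lte_fin ab.
have DP : 0 < D by rewrite /D divr_gt0 // subr_gt0.
rewrite ifT; last lra.
rewrite -EFinM lee_fin /D; rewrite le_eqVlt; apply/orP; left; apply/eqP; field; lra.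
Qed.

Lemma lm_ge0 (R : realType) (X : set R) : (0 <= lebesgue_measure X)%E.
Proof. exact: (@mu_ext_ge0 _ _ R (wlength idfun)). Qed.

Lemma lm_sub (R : realType) (F : (set R)^nat) :
  (lebesgue_measure (\bigcup_n F n) <= \sum_(0 <= i <oo) lebesgue_measure (F i))%E.
Proof.
apply: (@mu_ext_sigma_subadditive _ _ R (wlength idfun)).
move=> X; exact: wlength_ge0.
Qed.

Lemma K (R : realType) (f : R -> R) (I E : set R) (m : R) : 0 < m ->
  (forall s s', I s -> I s' -> m * `|s - s'| <= `|f s - f s'|) ->
  (lebesgue_measure (I `&` f @^-1` E) <= (2 / m)%:E * lebesgue_measure E)%E.
Proof.
move=> m0 Hf.
have key : ((m / 2)%:E * lebesgue_measure (I `&` f @^-1` E) <= lebesgue_measure E)%E.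
  rewrite [X in (_ <= X)%E]/lebesgue_measure /lebesgue_stieltjes_measure /measure_extension.
  apply/ereal_infP => _ [F [mF EF] <-].
  have h1 : (lebesgue_measure (I `&` f @^-1` E) <=
     \sum_(0 <= i <oo) lebesgue_measure (I `&` f @^-1` F i))%E.
    apply: le_trans; last exact: lm_sub.
    apply: lm_le => s [Is /= /EF [k _ Fk]].
    by exists k.
  have h2 : (\sum_(0 <= i <oo) lebesgue_measure (I `&` f @^-1` F i) <=
     \sum_(0 <= i <oo) ((2 / m)%:E * wlength idfun (F i)))%E.
    apply: lee_nneseries => [i _ _|i _]; first exact: lm_ge0.
    by case: (mF i) => -[a b] _ <-; exact: K_itv.
  rewrite nneseriesZl in h2; last first.
    by move=> i _; case: (mF i) => -[a b] _ <-; exact: wlength_ge0.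
  have h3 := le_trans h1 h2.
  have m2 : (m / 2) * (2 / m) = 1 by field; lra.
  apply: (le_trans (lee_wpmul2l _ h3)); first by rewrite lee_fin; lra.
  by rewrite muleA -EFinM m2 mul1e.
have m2 : (2 / m) * (m / 2) = 1 by field; lra.
apply: (le_trans _ (lee_wpmul2l _ key)); last by rewrite lee_fin divr_ge0 // ltW.
by rewrite muleA -EFinM m2 mul1e.
Qed.

Lemma dens (R : realType) (A : set R) : measurable A -> (0 < lebesgue_measure A)%E ->
  exists a0 : R, exists rho : R, 0 < rho /\ forall r, 0 < r -> r <= rho ->
    (lebesgue_measure (ball a0 r `\` A) <= (r / 50)%:E)%E.
Proof.
move=> mA A0.
have [N [mN N0 sub]] := lebesgue_density mA.
have [x [Ax Px]] : exists x, A x /\ ~ (~` [set x | (lebesgue_measure (A `&` ball x r) *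
   (lebesgue_measure (ball x r))^-1)%E @[r --> 0^'+] --> (\1_A x)%:E]) x.
  apply: contrapT => hn.
  have AN : A `<=` N.
    move=> a Aa; apply: sub; apply: contrapT => Pa; apply: hn; exists a.
    by split.
  have := (@le_mu_ext _ _ R (wlength idfun) A N AN).
  have hN : (wlength idfun)^*%mu N = 0 := N0.
  by rewrite hN leNgt A0.
move/contrapT: Px; rewrite /= indicE mem_set //= => Px.
have nU : nbhs (1%:E : \bar R) [set y : \bar R | ((99/100)%:E < y)%E].
  apply: open_nbhs_nbhs; split; first exact: open_ereal_gt_ereal.
  rewrite /= lte_fin; lra.
have H := Px _ nU.
case: H => e /= e0 He.
exists x, (e / 2); split; first lra.
move=> r r0 re.
have hb : ball_ (fun y : R => `|y|) 0 e r.
  rewrite /ball_ /= sub0r normrN gtr0_norm //; lra.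
have := He r hb r0.
have mb : measurable (ball x r) by exact: measurable_realfun.measurable_ball.
have fa : lebesgue_measure (A `&` ball x r) \is a fin_num.
  rewrite ge0_fin_numE; last exact: measure_ge0.
  apply: (le_lt_trans (lm_le (@subIsetr _ A (ball x r)))).
  by rewrite lebesgue_measure_ball ?ltry // ltW.
move=> h0.
have : ((99/100)%:E < lebesgue_measure (A `&` ball x r) / lebesgue_measure (ball x r))%E := h0.
rewrite (lebesgue_measure_ball _ (ltW r0)) -(fineK fa) inver mulrn_eq0 /= gt_eqF //.
rewrite -EFinM lte_fin => ha.
have -> : lebesgue_measure (ball x r `\` A) = (lebesgue_measure (ball x r) - lebesgue_measure (ball x r `&` A))%E.
  have hb2 : (lebesgue_measure (ball x r) < +oo)%E.
    by rewrite (lebesgue_measure_ball _ (ltW r0)) ltry.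
  by rewrite measureD.
rewrite setIC (lebesgue_measure_ball _ (ltW r0)) -(fineK fa) -EFinB lee_fin.
move: ha; set a := fine _ => ha.
have : 99 / 100 * (r *+ 2) < a.
  by rewrite -ltr_pdivlMr // mulrn_wgt0.
rewrite -mulr_natr; lra.
Qed.

Lemma arith_lip (R : realType) (H H' W W' m : R) :
  0 <= H -> H <= 1 -> 0 <= H' -> H' <= 1 ->
  H ^+ 2 + W ^+ 2 = 1 -> H' ^+ 2 + W' ^+ 2 = 1 -> 0 < m -> 2 * m <= W + W' ->
  m * `|W - W'| <= `|H - H'|.
Proof.
move=> H0 H1 H'0 H'1 e e' m0 mW.
have key : `|H - H'| * (H + H') = `|W - W'| * (W + W').
  rewrite -[H + H']ger0_norm; last lra.
  rewrite -[W + W']ger0_norm; last lra.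
  rewrite -!normrM -[X in _ = X]normrN; congr (`| _ |).
  have -> : (H - H') * (H + H') = H ^+ 2 - H' ^+ 2 by ring.
  have -> : - ((W - W') * (W + W')) = W' ^+ 2 - W ^+ 2 by ring.
  lra.
have n1 := normr_ge0 (H - H').
have n2 := normr_ge0 (W - W').
nra.
Qed.

Lemma arith_loc (R : realType) (V H W t d q : R) :
  1 / 2 < V -> 0 <= H -> H ^+ 2 + W ^+ 2 = 1 ->
  0 < d -> 0 <= t -> d + t <= W -> W <= 2 * d + t ->
  `|q - 1| < 3 * d ^+ 2 -> q = t ^+ 2 + V ^+ 2 ->
  `|V - H| < 16 * d ^+ 2 + 8 * d * t.
Proof.
move=> V0 H0 e d0 t0 W1 W2 hq hqe; rewrite hqe in hq.
move: hq; rewrite ltr_norml => /andP [q1 q2].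
have P : (V - H) * (V + H) = t ^+ 2 + V ^+ 2 - 1 + (W ^+ 2 - t ^+ 2).
  have -> : (V - H) * (V + H) = V ^+ 2 - H ^+ 2 by ring.
  lra.
have Wa : 0 <= W ^+ 2 - t ^+ 2.
  have -> : W ^+ 2 - t ^+ 2 = (W - t) * (W + t) by ring.
  apply: mulr_ge0; lra.
have Wb : W ^+ 2 - t ^+ 2 <= 4 * d ^+ 2 + 4 * d * t.
  have -> : W ^+ 2 - t ^+ 2 = (W - t) * (W + t) by ring.
  have h1 : (W - t) * (W + t) <= (2 * d) * (W + t) by apply: ler_wpM2r; lra.
  have h2 : (2 * d) * (W + t) <= (2 * d) * (2 * d + 2 * t) by apply: ler_wpM2l; lra.
  have -> : 4 * d ^+ 2 + 4 * d * t = (2 * d) * (2 * d + 2 * t) by ring.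
  lra.
have dd : 0 < d ^+ 2 by rewrite exprn_gt0.
have dt : 0 <= d * t by rewrite mulr_ge0 // ltW.
rewrite ltr_norml; apply/andP; split.
  case: (lerP 0 (V - H)) => h; first lra.
  have : (V - H) * (V + H) <= (V - H) * (1 / 2) by apply: ler_wnM2l; lra.
  lra.
case: (lerP (V - H) 0) => h; first lra.
have : (V - H) * (1 / 2) <= (V - H) * (V + H) by apply: ler_wpM2l; lra.
lra.
Qed.

Lemma core (R : realType) (A B : set R) (a0 b0 d : R) : 0 < d -> d <= 1 / 32 ->
  measurable A ->
  (forall r, 0 < r -> r <= 32 * d -> (lebesgue_measure (ball a0 r `\` A) <= (r / 50)%:E)%E) ->
  (forall r, 0 < r -> r <= 32 * d -> (lebesgue_measure (ball b0 r `\` B) <= (r / 50)%:E)%E) ->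
  forall v1 v2 : R, `|v1| <= `|v2| ->
  (1 - d ^+ 2) ^+ 2 < v1 ^+ 2 + v2 ^+ 2 -> v1 ^+ 2 + v2 ^+ 2 < (1 + d ^+ 2) ^+ 2 ->
  exists a b, A a /\ B b /\ (a - a0 - v1) ^+ 2 + (b - b0 - v2) ^+ 2 = 1.
Proof.
move=> d0 d1 mA dA dB v1 v2 hv lo hi.
set t := `|v1|; set V := `|v2|.
have t0 : 0 <= t by exact: normr_ge0.
have ht : v1 ^+ 2 = t ^+ 2 by rewrite /t real_normK // num_real.
have hV : v2 ^+ 2 = V ^+ 2 by rewrite /V real_normK // num_real.
rewrite ht hV in lo hi.
have dd : d ^+ 2 <= 1 / 1024 by rewrite expr2; nra.
have e0 : 0 <= d ^+ 2 by rewrite exprn_ge0 // ltW.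
have hi2 : (1 + d ^+ 2) ^+ 2 <= 1 + 3 * d ^+ 2.
  have -> : (1 + d ^+ 2) ^+ 2 = 1 + 2 * d ^+ 2 + d ^+ 2 * d ^+ 2 by ring.
  nra.
have lo2 : 1 - 2 * d ^+ 2 <= (1 - d ^+ 2) ^+ 2.
  have -> : (1 - d ^+ 2) ^+ 2 = 1 - 2 * d ^+ 2 + d ^+ 2 * d ^+ 2 by ring.
  nra.
have tV : t <= V := hv.
have tV2 : t ^+ 2 <= V ^+ 2 by rewrite !expr2; nra.
have tb : t < 3 / 4.
  case: (ltrP t (3/4)) => // h.
  have : (3/4) * (3/4) <= t ^+ 2 by rewrite expr2; nra.
  lra.
have Vb : 1 / 2 < V.
  case: (ltrP (1/2) V) => // h.
  have hV0 : 0 <= V by exact: normr_ge0.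
  have : V ^+ 2 <= (1/2) * (1/2) by rewrite expr2; nra.
  lra.
pose tau : R := if v1 <= 0 then 1 else -1.
have htau : tau * v1 = - t /\ tau * tau = 1.
  rewrite /tau /t; case: ifP => h; (split; last by ring).
    by rewrite ler0_norm // opprK mul1r.
  rewrite gtr0_norm; first by rewrite mulN1r.
  by rewrite ltNge h.
pose sig : R := if 0 <= v2 then 1 else -1.
have hsig : sig * v2 = V /\ sig * sig = 1.
  rewrite /sig /V; case: ifP => h; (split; last by ring).
    by rewrite ger0_norm // mul1r.
  rewrite ltr0_norm; first by rewrite mulN1r.
  by rewrite ltNge h.
pose c := if v1 <= 0 then a0 + d else a0 - 2 * d.
have hI : forall s, c <= s <= c + d -> d <= tau * (s - a0) <= 2 * d.
  move=> s; rewrite /c /tau; case: ifP => h /andP [h1 h2]; apply/andP; split; lra.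
pose W s := tau * (s - a0) + t.
have Wdef : forall s, s - a0 - v1 = tau * W s.
  move=> s; rewrite /W mulrDr mulrA (proj2 htau) mul1r.
  have : tau * t = - v1.
    have -> : tau * t = - (tau * (tau * v1)) by rewrite (proj1 htau) mulrN opprK.
    by rewrite mulrA (proj2 htau) mul1r.
  move=> ->; ring.
pose H s := Num.sqrt (1 - W s ^+ 2).
pose f s := b0 + v2 - sig * H s.
have Hp : forall s, c <= s <= c + d ->
   [/\ 0 <= H s, H s <= 1, H s ^+ 2 + W s ^+ 2 = 1 & d + t <= W s <= 2 * d + t].
  move=> s /hI /andP [h1 h2].
  have W1 : d + t <= W s by rewrite /W; lra.
  have W2 : W s <= 2 * d + t by rewrite /W; lra.
  have Wp : 1 - W s ^+ 2 >= 0 by nra.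
  have HH : H s ^+ 2 = 1 - W s ^+ 2 by rewrite /H sqr_sqrtr.
  have H0 : 0 <= H s by exact: sqrtr_ge0.
  split => //; last by rewrite W1 W2.
    nra.
  lra.
have ntau : `|tau| = 1 by rewrite /tau; case: ifP; rewrite ?normrN normr1.
have nsig : `|sig| = 1 by rewrite /sig; case: ifP; rewrite ?normrN normr1.
pose I := `[c, c + d]%classic.
have lip : forall s s', I s -> I s' -> (d + t) * `|s - s'| <= `|f s - f s'|.
  move=> s s'; rewrite /I /= !in_itv /= => hs hs'.
  have [Hs0 Hs1 Hse /andP [Ws1 Ws2]] := Hp s hs.
  have [Hs0' Hs1' Hse' /andP [Ws1' Ws2']] := Hp s' hs'.
  have -> : f s - f s' = sig * (H s' - H s) by rewrite /f; ring.
  have -> : s - s' = tau * (W s - W s').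
    rewrite /W.
    have -> : tau * (tau * (s - a0) + t - (tau * (s' - a0) + t)) = (tau * tau) * (s - s') by ring.
    by rewrite (proj2 htau) mul1r.
  rewrite !normrM ntau nsig !mul1r distrC.
  apply: arith_lip => //; lra.
have loc : forall s, I s -> `|f s - b0| < 16 * d ^+ 2 + 8 * d * t.
  move=> s; rewrite /I /= !in_itv /= => hs.
  have [Hs0 Hs1 Hse /andP [Ws1 Ws2]] := Hp s hs.
  have -> : f s - b0 = sig * (V - H s).
    rewrite /f -(proj1 hsig).
    have -> : sig * (sig * v2 - H s) = (sig * sig) * v2 - sig * H s by ring.
    rewrite (proj2 hsig) mul1r; ring.
  rewrite normrM nsig mul1r.
  apply: (@arith_loc _ V (H s) (W s) t d (t ^+ 2 + V ^+ 2)) => //.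
  have e3 : 0 < d ^+ 2 by rewrite exprn_gt0.
  rewrite ltr_norml; apply/andP; split; lra.
case: (pselect (exists a, I a /\ A a /\ B (f a))) => [[a [Ia [Aa Bfa]]] | hn].
  exists a, (f a); split => //; split => //.
  move: Ia; rewrite /I /= in_itv /= => Ia.
  have [_ _ Hae _] := Hp a Ia.
  rewrite Wdef.
  have -> : f a - b0 - v2 = - (sig * H a) by rewrite /f; ring.
  have -> : (tau * W a) ^+ 2 + (- (sig * H a)) ^+ 2 =
     (tau * tau) * W a ^+ 2 + (sig * sig) * H a ^+ 2 by ring.
  rewrite (proj2 htau) (proj2 hsig) !mul1r; lra.
exfalso.
set Rb := 16 * d ^+ 2 + 8 * d * t.
have mpos : 0 < d + t by lra.
have Rb0 : 0 < Rb.
  have : 0 < d ^+ 2 by rewrite exprn_gt0.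
  have : 0 <= d * t by rewrite mulr_ge0 // ltW.
  rewrite /Rb; lra.
have Rb1 : Rb <= 32 * d by rewrite /Rb expr2; nra.
have sub2 : I `&` A `<=` I `&` f @^-1` (ball b0 Rb `\` B).
  move=> s [Is As]; split => //; split.
    by rewrite /ball /= distrC; apply: loc.
  by move=> Bs; apply: hn; exists s.
have e2 := le_trans (lm_le sub2) (K _ _ _ (ball b0 Rb `\` B) _ mpos lip).
have e2' : (lebesgue_measure (I `&` A) <= ((2 / (d + t)) * (Rb / 50))%:E)%E.
  apply: (le_trans e2); rewrite [X in (_ <= X)%E]EFinM; apply: lee_wpmul2l; last exact: dB.
  by rewrite lee_fin divr_ge0 // ltW.
have sub1 : I `\` A `<=` ball a0 (3 * d) `\` A.
  move=> s [Is As]; split => //.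
  move: Is; rewrite /I /= in_itv /= => /hI hs.
  rewrite /ball /= distrC.
  have : `|s - a0| = `|tau * (s - a0)| by rewrite normrM ntau mul1r.
  move=> ->; rewrite ger0_norm; lra.
have e1 : (lebesgue_measure (I `\` A) <= ((3 * d) / 50)%:E)%E.
  apply: (le_trans (lm_le sub1)); apply: dA; lra.
have mI : measurable I by exact: measurable_itv.
have e3 : (lebesgue_measure I <= lebesgue_measure (I `&` A) + lebesgue_measure (I `\` A))%E.
  rewrite -{1}(setUIDK I A).
  exact: (measureU2 lebesgue_measure (measurableI _ _ mI mA) (measurableD mI mA)).
have lamI : lebesgue_measure I = d%:E.
  rewrite /I lebesgue_measure_itv /= lte_fin ifT; last lra.
  by rewrite -EFinB; congr (_%:E); ring.
have := le_trans e3 (leeD e2' e1).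
rewrite lamI -EFinD lee_fin.
have : (2 / (d + t)) * (Rb / 50) <= 16 * d / 25.
  have -> : (2 / (d + t)) * (Rb / 50) = (Rb / (d + t)) / 25 by field; lra.
  have h : Rb / (d + t) <= 16 * d.
    rewrite ler_pdivrMr //.
    rewrite /Rb expr2; nra.
  lra.
lra.
Qed.

Lemma sq_bounds (R : realType) (q e : R) : 0 < e -> e < 1 -> 0 <= q ->
  1 - e < Num.sqrt q < 1 + e -> (1 - e) ^+ 2 < q /\ q < (1 + e) ^+ 2.
Proof.
move=> e0 e1 q0 /andP [h1 h2].
have s0 := sqrtr_ge0 q.
have sq : Num.sqrt q ^+ 2 = q by rewrite sqr_sqrtr.
rewrite -sq; split; rewrite !expr2; nra.
Qed.

Theorem mainTheorem3 (R : realType) (A B : set R) :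
  measurable A -> measurable B ->
  (0 < (@lebesgue_measure R) A)%E -> (0 < (@lebesgue_measure R) B)%E ->
  exists (p : R * R) (eps : R), 0 < eps /\
    annulus1 p eps `<=` minkowski_sum2 (setX A B) circle1.
Proof.
move=> mA mB A0 B0.
have [a0 [rA [rA0 dA]]] := dens _ _ mA A0.
have [b0 [rB [rB0 dB]]] := dens _ _ mB B0.
pose mm := Num.min (Num.min rA rB) 1.
have m1 : mm <= rA by rewrite /mm !ge_min lexx.
have m2 : mm <= rB by rewrite /mm !ge_min lexx orbT.
have m3 : mm <= 1 by rewrite /mm ge_min lexx orbT.
have m0 : 0 < mm by rewrite /mm !lt_min rA0 rB0 ltr01.
pose d := mm / 32.
have d0 : 0 < d by rewrite /d; lra.
have d1 : d <= 1 / 32 by rewrite /d; lra.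
have dA' : forall r, 0 < r -> r <= 32 * d -> (lebesgue_measure (ball a0 r `\` A) <= (r / 50)%:E)%E.
  move=> r r0 r1; apply: dA => //; rewrite /d in r1; lra.
have dB' : forall r, 0 < r -> r <= 32 * d -> (lebesgue_measure (ball b0 r `\` B) <= (r / 50)%:E)%E.
  move=> r r0 r1; apply: dB => //; rewrite /d in r1; lra.
have e0 : 0 < d ^+ 2 by rewrite exprn_gt0.
have e1 : d ^+ 2 < 1 by rewrite expr2; nra.
exists (a0, b0), (d ^+ 2); split => //.
case=> x1 x2; rewrite /annulus1 /eucl_norm /= => hx.
set v1 := x1 - a0; set v2 := x2 - b0.
have q0 : 0 <= v1 ^+ 2 + v2 ^+ 2 by rewrite addr_ge0 // sqr_ge0.
have [lo hi] := sq_bounds _ _ _ e0 e1 q0 hx.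
have key : exists a b, A a /\ B b /\ (a - a0 - v1) ^+ 2 + (b - b0 - v2) ^+ 2 = 1.
  case: (lerP `|v1| `|v2|) => hv.
    exact: (core _ _ _ _ _ _ d0 d1 mA dA' dB' _ _ hv lo hi).
  rewrite [v1 ^+ 2 + _]addrC in lo hi.
  have [b [a [Bb [Aa e]]]] := core _ _ _ _ _ _ d0 d1 mB dB' dA' _ _ (ltW hv) lo hi.
  by exists a, b; split => //; split => //; rewrite addrC.
case: key => a [b [Aa [Bb e]]].
exists (a, b), (x1 - a, x2 - b); split; first by [].
split.
  rewrite /circle1 /eucl_norm /=.
  have -> : (x1 - a) ^+ 2 + (x2 - b) ^+ 2 = (a - a0 - v1) ^+ 2 + (b - b0 - v2) ^+ 2.
    by rewrite /v1 /v2; ring.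
  by rewrite e sqrtr1.
by congr (_, _) => /=; ring.
Qed.
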